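(* For any orderings of $V$ used in the two passes, the output $S$ of the Two-Pass algorithm satisfies $|S|\le k$ and $f(S)\ge\frac59\mathrm{OPT}$.
   Context: $V$ is a finite ground set with $|V|=n$; $f:2^V\to\mathbb{R}_{\ge0}$ is monotone, submodular and normalized; $f(e\mid Y)=f(Y\cup\{e\})-f(Y)$. $k\le n$ is a positive integer and $\mathrm{OPT}=\max\{f(S):S\subseteq V,|S|\le k\}$. Two-Pass algorithm (knows $\mathrm{OPT}$): start with $S=\emptyset$. In the first pass over the elements of $V$ (in some order), add each element $e$ to $S$ if $|S|<k$ and $f(e\mid S)\ge\frac{2}{3}\cdot\frac{\mathrm{OPT}}{k}$. In the second pass over the elements of $V$ (in some order), add each element $e$ to $S$ if $|S|<k$ and $f(e\mid S)\ge\frac{4}{9}\cdot\frac{\mathrm{OPT}}{k}$. Return $S$. *)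

(* Defs.v *)
From HB Require Import structures.
From mathcomp Require Import all_boot all_order all_algebra.
Set Implicit Arguments. Unset Strict Implicit. Unset Printing Implicit Defensive.
Import Order.TTheory GRing.Theory Num.Theory.
Local Open Scope ring_scope.

Section TwoPass.
Variables (T : finType) (R : realFieldType).

Definition marg (f : {set T} -> R) (e : T) (Y : {set T}) : R := f (e |: Y) - f Y.

Definition monotone_set_fun (f : {set T} -> R) : Prop :=
  forall A B : {set T}, A \subset B -> f A <= f B.

Definition submodular (f : {set T} -> R) : Prop :=
  forall (A B : {set T}) (e : T), A \subset B -> e \notin B ->
    marg f e B <= marg f e A.

Definition normalized (f : {set T} -> R) : Prop := f set0 = 0.

Definition nonneg_set_fun (f : {set T} -> R) : Prop := forall A, 0 <= f A.

(* OPT = max { f S : |S| <= k }  (0 is a neutral start since f >= 0 and set0 is feasible) *)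
Definition OPT (f : {set T} -> R) (k : nat) : R :=
  \big[Num.max/0]_(S : {set T} | (#|S| <= k)%N) f S.

Definition pass (f : {set T} -> R) (k : nat) (tau : R) (s : seq T) (S0 : {set T})
  : {set T} :=
  foldl (fun (S : {set T}) (e : T) => if (#|S| < k)%N && (tau <= marg f e S) then e |: S else S) S0 s.

Definition two_pass (f : {set T} -> R) (k : nat) (s1 s2 : seq T) : {set T} :=
  let opt := OPT f k in
  pass f k ((4%:R / 9%:R) * (opt / k%:R)) s2
    (pass f k ((2%:R / 3%:R) * (opt / k%:R)) s1 set0).

End TwoPass.

(* Main.v *)
Require Import Defs.
From HB Require Import structures.
From mathcomp Require Import all_boot all_order all_algebra.
From mathcomp Require Import lra.
Import Order.TTheory GRing.Theory Num.Theory.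
Local Open Scope ring_scope.

Lemma setU1_in (T : finType) (e : T) (A : {set T}) : e \in A -> e |: A = A.
Proof. by move=> h; apply/setUidPr; rewrite sub1set. Qed.

Lemma marg_in (T : finType) (R : realFieldType) (f : {set T} -> R) (e : T) (A : {set T}) :
  e \in A -> marg f e A = 0.
Proof. by move=> h; rewrite /marg setU1_in // subrr. Qed.

Lemma pass_sub (T : finType) (R : realFieldType) (f : {set T} -> R) (k : nat) (tau : R) (s : seq T) (S0 : {set T}) :
  S0 \subset pass f k tau s S0.
Proof.
elim: s S0 => [|e s IH] S0 /=; first exact: subxx.
apply: (subset_trans _ (IH _)); case: ifP => _ //; exact: subsetU1.
Qed.

Lemma pass_card (T : finType) (R : realFieldType) (f : {set T} -> R) (k : nat) (tau : R) (s : seq T) (S0 : {set T}) :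
  (#|S0| <= k)%N -> (#|pass f k tau s S0| <= k)%N.
Proof.
elim: s S0 => [|e s IH] S0 //= H; apply: IH; case: ifP => // /andP[lt _].
rewrite cardsU1; case: (e \notin S0) => /=; [by rewrite add1n | by rewrite add0n; exact: ltnW].
Qed.

Lemma pass_val (T : finType) (R : realFieldType) (f : {set T} -> R) (k : nat) (tau : R) (s : seq T) (S0 : {set T}) :
  f S0 - tau * #|S0|%:R <= f (pass f k tau s S0) - tau * #|pass f k tau s S0|%:R.
Proof.
elim: s S0 => [|e s IH] S0 /=; first exact: lexx.
apply: le_trans (IH _); case: ifP => // /andP[_ hm]; rewrite /marg in hm.
rewrite cardsU1; case he: (e \in S0) => /=.
  by rewrite setU1_in.
rewrite add1n -addn1 natrD mulrDr mulr1; lra.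
Qed.

Lemma pass_reject (T : finType) (R : realFieldType) (f : {set T} -> R) (k : nat) (tau : R) (s : seq T) (S0 : {set T}) :
  submodular f -> (#|pass f k tau s S0| < k)%N -> forall e, e \in s ->
  e \notin pass f k tau s S0 -> marg f e (pass f k tau s S0) < tau.
Proof.
move=> hsub; elim: s S0 => [|x s IH] S0 // hlt e.
rewrite inE => /orP[/eqP -> | hes] hnot; last exact: IH.
rewrite /= in hlt hnot *.
have hS0 : (#|S0| < k)%N.
  apply: leq_ltn_trans hlt; apply: subset_leq_card.
  apply: (subset_trans _ (pass_sub _ _ f k tau s _)); case: ifP => _ //; exact: subsetU1.
case E: ((#|S0| < k)%N && (tau <= marg f x S0)) in hlt hnot *.
  have := subsetP (pass_sub _ _ f k tau s (x |: S0)) x (setU11 x S0).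
  by rewrite (negbTE hnot).
rewrite hS0 /= in E.
have hx : marg f x S0 < tau by rewrite ltNge E.
apply: le_lt_trans hx; apply: hsub => //; exact: pass_sub.
Qed.

Lemma sum_bound (T : finType) (R : realFieldType) (f : {set T} -> R) (A : {set T}) tau l :
  monotone_set_fun f -> submodular f -> (forall e, e \in l -> marg f e A <= tau) ->
  f (A :|: [set x in l]) <= f A + (size l)%:R * tau.
Proof.
move=> hmon hsub; elim: l => [|e l IH] H.
  have -> : [set x in [::]] = set0 :> {set T} by apply/setP=> x; rewrite !inE.
  by rewrite setU0 /= mul0r addr0.
have -> : A :|: [set x in e :: l] = e |: (A :|: [set x in l]).
  by apply/setP=> x; rewrite !inE orbCA.
set B := A :|: [set x in l].
have hB : f B <= f A + (size l)%:R * tau.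
  by apply: IH => x hx; apply: H; rewrite inE hx orbT.
have hA : marg f e A <= tau by apply: H; rewrite inE eqxx.
have hBA : marg f e B <= marg f e A.
  case he: (e \in B).
    rewrite marg_in // /marg subr_ge0; apply: hmon; exact: subsetU1.
  by apply: hsub; [exact: subsetUl | rewrite he].
have -> : f (e |: B) = f B + marg f e B by rewrite /marg addrC subrK.
rewrite /= -addn1 natrD mulrDl mul1r; lra.
Qed.

Lemma opt_attained (T : finType) (R : realFieldType) (f : {set T} -> R) k :
  normalized f -> exists2 O : {set T}, (#|O| <= k)%N & OPT f k <= f O.
Proof.
move=> h0; rewrite /OPT; apply: (big_ind (fun x => exists2 O : {set T}, (#|O| <= k)%N & x <= f O)).
- by exists set0; rewrite ?cards0 // h0.
- move=> x y [O1 h1 h1'] [O2 h2 h2']; have [hxy|hxy] := leP x y.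
  + by exists O2.
  + by exists O1.
- by move=> i hi; exists i.
Qed.

Lemma opt_ge0 (T : finType) (R : realFieldType) (f : {set T} -> R) k :
  nonneg_set_fun f -> 0 <= OPT f k.
Proof.
move=> hnn; rewrite /OPT; apply: (big_ind (fun x => 0 <= x)) => //.
by move=> x y hx _; rewrite le_max hx.
Qed.

Lemma finA {R : realFieldType} {o fS1 fS a b c : R} : 0 <= o -> 0 <= fS1 - a ->
  a = 2%:R / 3%:R * o -> fS1 - b <= fS - c -> b <= c -> 5%:R / 9%:R * o <= fS.
Proof. move=> h1 h2 ha h3 h4; rewrite ha in h2; lra. Qed.

Lemma finB2 {R : realFieldType} {o fS : R} : o <= fS + 4%:R / 9%:R * o -> 5%:R / 9%:R * o <= fS.
Proof. move=> ?; lra. Qed.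

Lemma finB1 {R : realFieldType} {o J fS fS1 : R} :
  0 <= fS1 - 2%:R / 3%:R * J -> o <= fS1 + 2%:R / 3%:R * o ->
  fS1 - 4%:R / 9%:R * J <= fS - 4%:R / 9%:R * o -> 5%:R / 9%:R * o <= fS.
Proof. move=> ? ? ?; have [h|h] := leP o (2%:R * J); lra. Qed.

Theorem mainTheorem16 (T : finType) (R : realFieldType) (f : {set T} -> R)
  (k : nat) (s1 s2 : seq T) :
  nonneg_set_fun f -> monotone_set_fun f -> submodular f -> normalized f ->
  (0 < k)%N -> (k <= #|T|)%N ->
  perm_eq s1 (enum T) -> perm_eq s2 (enum T) ->
  (#|two_pass f k s1 s2| <= k)%N /\
  (5%:R / 9%:R) * OPT f k <= f (two_pass f k s1 s2).
Proof.
move=> hnn hmon hsub h0 kpos kT p1 p2.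
rewrite /two_pass.
set o := OPT f k.
set u := o / k%:R.
set t1 := 2%:R / 3%:R * u.
set t2 := 4%:R / 9%:R * u.
set S1 := pass f k t1 s1 set0.
set S := pass f k t2 s2 S1.
have cS1 : (#|S1| <= k)%N by apply: pass_card; rewrite cards0.
have cS : (#|S| <= k)%N by apply: pass_card.
split => //.
have [O cO hO] := @opt_attained T R f k h0.
have o0 : 0 <= o := @opt_ge0 T R f k hnn.
have kR : 0 < k%:R :> R by rewrite ltr0n.
have u0 : 0 <= u by rewrite /u divr_ge0 // ltW.
have ku : k%:R * u = o by rewrite /u mulrC divfK // gt_eqF.
have t10 : 0 <= t1 by rewrite /t1 mulr_ge0 // divr_ge0.
have t20 : 0 <= t2 by rewrite /t2 mulr_ge0 // divr_ge0.
have gen : forall (X : {set T}) tau, 0 <= tau ->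
    (forall e, e \in O -> e \notin X -> marg f e X <= tau) -> o <= f X + k%:R * tau.
  move=> X tau tau0 H.
  apply: (le_trans hO); apply: (le_trans (hmon _ _ (subsetUr X O))).
  rewrite -{1}(set_enum O).
  have hs : f (X :|: [set x in enum O]) <= f X + (size (enum O))%:R * tau.
    apply: sum_bound => // e; rewrite mem_enum => he; case hX: (e \in X).
      by rewrite marg_in.
    by apply: H; rewrite ?hX.
  apply: (le_trans hs).
  rewrite -cardE lerD2l ler_wpM2r // ler_nat.
  exact: cO.
have in1 : forall e, e \in s1 by move=> e; rewrite (perm_mem p1) mem_enum.
have in2 : forall e, e \in s2 by move=> e; rewrite (perm_mem p2) mem_enum.
have V1 := @pass_val T R f k t1 s1 set0.
rewrite -/S1 cards0 mulr0 subr0 h0 in V1.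
have V2 := @pass_val T R f k t2 s2 S1; rewrite -/S in V2.
have jm : (#|S1| <= #|S|)%N by apply: subset_leq_card; exact: pass_sub.
have ht1 : k%:R * t1 = 2%:R / 3%:R * o by rewrite /t1 mulrCA ku.
have ht2 : k%:R * t2 = 4%:R / 9%:R * o by rewrite /t2 mulrCA ku.
have t1j : t1 * #|S1|%:R = 2%:R / 3%:R * (u * #|S1|%:R) by rewrite /t1 -mulrA.
have t2j : t2 * #|S1|%:R = 4%:R / 9%:R * (u * #|S1|%:R) by rewrite /t2 -mulrA.
have t2m : t2 * #|S1|%:R <= t2 * #|S|%:R by rewrite ler_wpM2l // ler_nat.
have [jk|jk] := ltnP #|S1| k; last first.
  have : #|S1| = k by apply/eqP; rewrite eqn_leq cS1 jk.
  move=> ej; rewrite ej in V1 V2 t2m.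
  have ha : t1 * k%:R = 2%:R / 3%:R * o by rewrite mulrC ht1.
  exact: (finA o0 V1 ha V2 t2m).
have B1 : o <= f S1 + k%:R * t1.
  apply: gen => // e _ he; apply: ltW; apply: pass_reject => //.
rewrite ht1 in B1.
have [mk|mk] := ltnP #|S| k.
  have B2 : o <= f S + k%:R * t2.
    apply: gen => // e _ he; apply: ltW; apply: pass_reject => //.
  rewrite ht2 in B2; exact: finB2.
have em : #|S| = k by apply/eqP; rewrite eqn_leq cS mk.
rewrite em in V2.
have hm : t2 * k%:R = 4%:R / 9%:R * o by rewrite mulrC ht2.
rewrite hm in V2.
rewrite t1j in V1; rewrite t2j in V2.
exact: (finB1 V1 B1 V2).
Qed.
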